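(* Let $k\geq 1$ be a fixed integer, $p=\frac{\log n+(k+1)\log\log n-\log\log\log n}{n}$, $G=G(n,p)$ and $D=\frac{\log n}{\log\log n}$. Call a vertex $v$ small if $d_G(v)<\frac{\log n}{100}$. Then almost surely there do not exist two distinct small vertices of $G$ at distance at most $\frac{3}{4}D$ in $G$.
   Context: $\log$ is the natural logarithm; $G(n,p)$ is the binomial random graph on $n$ vertices, $n\to\infty$; ''almost surely'' means with probability tending to $1$; $d_G(v)$ is the degree of $v$ in $G$. *)

(* Defs.v *)
From HB Require Import structures.
From mathcomp Require Import all_boot all_order all_algebra.
From mathcomp Require Import all_classical all_reals all_analysis.
Set Implicit Arguments. Unset Strict Implicit. Unset Printing Implicit Defensive.
Import Order.TTheory GRing.Theory Num.Theory numFieldNormedType.Exports.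
Local Open Scope ring_scope.

Definition pairs (n : nat) : {set {set 'I_n}} := [set e : {set 'I_n} | #|e| == 2%N].

Definition graphs (n : nat) : {set {set {set 'I_n}}} :=
  [set E : {set {set 'I_n}} | E \subset pairs n].

Definition adj (n : nat) (E : {set {set 'I_n}}) (u v : 'I_n) : bool :=
  (u != v) && ([set u; v] \in E).

Definition deg (n : nat) (E : {set {set 'I_n}}) (v : 'I_n) : nat :=
  #|[set w | adj E v w]|.

(* reach E t u v : there is a walk of length at most t from u to v,
   i.e. dist_G(u,v) <= t. *)
Fixpoint reach (n : nat) (E : {set {set 'I_n}}) (t : nat) (u v : 'I_n) : bool :=
  match t with
  | 0 => u == v
  | t'.+1 => reach E t' u v || [exists w, reach E t' u w && adj E w v]
  end.

Definition Gnp_prob (R : realType) (n : nat) (p : R)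
    (P : {set {set 'I_n}} -> Prop) : R :=
  \sum_(E in graphs n)
     (if `[< P E >] then p ^+ #|E| * (1 - p) ^+ (#|pairs n| - #|E|) else 0).

Definition almost_surely (R : realType) (p : nat -> R)
    (P : forall n, {set {set 'I_n}} -> Prop) : Prop :=
  ((fun n => Gnp_prob (p n) (@P n)) @ \oo --> (1 : R^o))%classic.

Definition p_lemma4 (R : realType) (k : nat) (n : nat) : R :=
  (ln (n%:R) + (k.+1)%:R * ln (ln (n%:R)) - ln (ln (ln (n%:R)))) / n%:R.

Definition D_lemma4 (R : realType) (n : nat) : R := ln (n%:R) / ln (ln (n%:R)).

Definition small (R : realType) (n : nat) (E : {set {set 'I_n}}) (v : 'I_n) : Prop :=
  ((deg E v)%:R : R) < ln (n%:R) / 100.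

(* Main.v *)
Require Import Defs.
From HB Require Import structures.
From mathcomp Require Import all_boot all_order all_algebra.
From mathcomp Require Import all_classical all_reals all_analysis.
From mathcomp Require Import ring lra.
From Stdlib Require Import Classical_Prop.
Set Implicit Arguments. Unset Strict Implicit. Unset Printing Implicit Defensive.
Import Order.TTheory GRing.Theory Num.Theory.
Local Open Scope ring_scope.

Section Comb.
Variable R : realType.

Definition wt (n : nat) (p : R) (E : {set {set 'I_n}}) : R :=
  p ^+ #|E| * (1 - p) ^+ (#|pairs n| - #|E|).

Lemma prod_if_in (n : nat) (p : R) (J : {set {set 'I_n}}) : J \subset pairs n ->
  \prod_(e in pairs n) (if e \in J then p else 1 - p) = wt p J.
Proof.
move=> sJ; rewrite (bigID (fun e => e \in J)) /=.
rewrite [X in X * _](eq_bigr (fun _ => p)); last by move=> e /andP[_ ->].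
rewrite [X in _ * X](eq_bigr (fun _ => 1 - p)); last by move=> e /andP[_ eJ]; rewrite (negbTE eJ).
rewrite !prodr_const /wt; congr (_ ^+ _ * _ ^+ _).
  apply: eq_card => e /=; apply/andP/idP => [[]//|eJ]; split => //.
  exact: (fintype.subsetP sJ).
have := cardsID J (pairs n); rewrite (finset.setIidPr sJ) => <-.
rewrite addKn; apply: eq_card => e /=.
by rewrite unfold_in /= /pairs !inE andbC.
Qed.

Lemma Gnp_expand (n : nat) (p : R) (phi : {set 'I_n} -> bool -> R) :
  \sum_(E in graphs n) wt p E * \prod_(e in pairs n) phi e (e \in E) =
  \prod_(e in pairs n) (p * phi e true + (1 - p) * phi e false).
Proof.
rewrite [RHS]big_mkcond /=.
rewrite [RHS](eq_bigr (fun e => (if e \in pairs n then p * phi e true else 0) +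
                          (if e \in pairs n then (1 - p) * phi e false else 1))); last first.
  by move=> e _; case: ifP => _; rewrite ?add0r.
rewrite bigA_distr /= [RHS](bigID (fun J => J \in graphs n)) /=.
rewrite [X in _ = _ + X]big1 ?addr0; last first.
  move=> J; rewrite inE => /subsetPn[e eJ ep].
  by rewrite (bigD1 e) //= eJ (negbTE ep) mul0r.
apply: eq_bigr => J; rewrite inE => sJ.
rewrite -prod_if_in // -big_split /= [RHS]big_mkcond /=.
rewrite [LHS]big_mkcond /=; apply: eq_bigr => e _.
case: ifP => ep; first by case: ifP.
have -> : (e \in J) = false.
  by apply/negbTE; apply: contraFN ep => eJ; exact: (fintype.subsetP sJ).
by [].
Qed.
End Comb.
Section Graph.
Variable n : nat.
Implicit Types (x y u v : 'I_n) (s : seq 'I_n) (E : {set {set 'I_n}}).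

Fixpoint pedges x s : {set {set 'I_n}} :=
  if s is y :: s' then [set x; y] |: pedges y s' else finset.set0.

Lemma pedges_sub x s e : e \in pedges x s -> forall z, z \in e -> z \in x :: s.
Proof.
elim: s x => [|y s IH] x /=; first by rewrite inE.
rewrite !inE => /orP[/eqP -> z|/IH H z /H zys]; last by rewrite inE zys orbT.
by rewrite !inE => /orP[->|->]; rewrite ?orbT.
Qed.

Lemma card_pedges x s : uniq (x :: s) -> #|pedges x s| = size s.
Proof.
elim: s x => [|y s IH] x /=; first by rewrite cards0.
move=> /andP[xys /andP[ys us]].
rewrite cardsU1 IH /= ?ys ?us //.
suff -> : [set x; y] \notin pedges y s by [].
apply/negP => /pedges_sub /(_ x); rewrite !inE eqxx => /(_ isT).
by move=> H; move: xys; rewrite inE H.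
Qed.

Lemma pedges_pairs x s : uniq (x :: s) -> pedges x s \subset pairs n.
Proof.
elim: s x => [|y s IH] x /=; first by rewrite finset.sub0set.
move=> /andP[xys /andP[ys us]].
rewrite finset.subUset finset.sub1set IH /= ?ys ?us // andbT inE cards2.
by move: xys; rewrite inE negb_or => /andP[-> _].
Qed.

Lemma pedges_E E x s : path (adj E) x s -> pedges x s \subset E.
Proof.
elim: s x => [|y s IH] x /=; first by rewrite finset.sub0set.
move=> /andP[/andP[_ xyE] ps].
by rewrite finset.subUset finset.sub1set xyE IH.
Qed.

Lemma reach_path E t u v : reach E t u v ->
  exists s, [/\ path (adj E) u s, last u s = v & (size s <= t)%N].
Proof.
elim: t v => [|t IH] v /=.
  by move=> /eqP ->; exists [::]; split.
move=> /orP[/IH [s [ps ls zs]]|/existsP[w /andP[/IH [s [ps ls zs]] awv]]].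
  by exists s; split => //; exact: leqW.
exists (rcons s v); split.
- by rewrite rcons_path ps ls.
- by rewrite last_rcons.
- by rewrite size_rcons.
Qed.

Lemma reach_upath E t u v : reach E t u v ->
  exists s, [/\ path (adj E) u s, uniq (u :: s), last u s = v & (size s <= t)%N].
Proof.
move=> /reach_path [s [ps ls zs]].
move: ls; case: (shortenP ps) => s' ps' us' ss' ls.
exists s'; split => //.
apply: leq_trans zs.
by apply: uniq_leq_size => //; case/andP: us'.
Qed.
End Graph.
Section Event.
Variable R : realType.
Variable n : nat.
Implicit Types (x y u v : 'I_n) (s : seq 'I_n) (E : {set {set 'I_n}}).

Definition lam : R := expR (-4).

Lemma lam_ge0 : 0 <= lam. Proof. exact: expR_ge0. Qed.
Lemma lam_le1 : lam <= 1. Proof. by rewrite /lam expR_le1 oppr_le0. Qed.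

Definition Sv u s : {set 'I_n} := [set z | z \in u :: s].

Definition Dset u s : {set {set 'I_n}} :=
  [set [set u; w] | w in ~: Sv u s] :|: [set [set last u s; w] | w in ~: Sv u s].

Definition phi u s (e : {set 'I_n}) (b : bool) : R :=
  if e \in pedges u s then b%:R else if e \in Dset u s then (if b then lam else 1) else 1.

Lemma DE_card E u s : (#|Dset u s :&: E| <= deg E u + deg E (last u s))%N.
Proof.
set v := last u s.
have sub : Dset u s :&: E \subset
   ((fun w => [set u; w]) @: [set w | adj E u w]) :|: ((fun w => [set v; w]) @: [set w | adj E v w]).
  apply/fintype.subsetP => e; rewrite !inE => /andP[/orP[] /imsetP[w wS ->] eE].
    apply/orP; left; apply/imsetP; exists w => //; rewrite inE /adj eE andbT.
    by apply/eqP => uw; move: wS; rewrite inE /Sv inE -uw mem_head.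
  apply/orP; right; apply/imsetP; exists w => //; rewrite inE /adj eE andbT.
  by apply/eqP => vw; move: wS; rewrite inE /Sv inE -vw /v mem_last.
apply: leq_trans (subset_leq_card sub) _.
apply: leq_trans (leq_card_setU _ _) _.
by apply: leq_add; apply: leq_imset_card.
Qed.

Lemma prod_if_ge (X : {set {set 'I_n}}) :
  lam ^+ #|X| <= \prod_(e in pairs n) (if e \in X then lam else 1).
Proof.
rewrite -big_mkcondr prodr_const.
apply: ler_wiXn2l; [exact: lam_ge0|exact: lam_le1|].
by apply: subset_leq_card; apply/fintype.subsetP => e /andP[].
Qed.

Lemma prod_phi_ge E u s : path (adj E) u s ->
  lam ^+ (deg E u + deg E (last u s)) <= \prod_(e in pairs n) phi u s e (e \in E).
Proof.
move=> ps.
apply: le_trans (_ : lam ^+ #|Dset u s :&: E| <= _).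
  by apply: ler_wiXn2l; [exact: lam_ge0|exact: lam_le1|exact: DE_card].
apply: le_trans (prod_if_ge _) _.
apply: ler_prod => e _; rewrite /phi.
case eA: (e \in pedges u s).
  have -> : e \in E by move/fintype.subsetP: (pedges_E ps); apply.
  by case: ifP => _; rewrite ?lam_ge0 ?lam_le1 ?ler01 ?lexx.
rewrite inE; case: (e \in Dset u s) => /=; last by rewrite ler01 lexx.
by case: (e \in E) => /=; rewrite ?lam_ge0 ?lexx ?ler01.
Qed.

Lemma D_notS u s e : e \in Dset u s -> exists2 w, w \notin Sv u s & w \in e.
Proof.
rewrite inE => /orP[]/imsetP[w wS ->]; exists w.
all: try by rewrite -finset.in_setC.
all: by rewrite !inE eqxx ?orbT.
Qed.

Lemma D_pedges u s e : e \in Dset u s -> e \notin pedges u s.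
Proof.
move=> /D_notS[w wS we]; apply/negP => /pedges_sub /(_ w we) H.
by move: wS; rewrite inE H.
Qed.

Lemma D_pairs u s : Dset u s \subset pairs n.
Proof.
apply/fintype.subsetP => e eD; rewrite inE.
move: eD; rewrite inE => /orP[]/imsetP[w wS ->]; rewrite cards2.
  suff -> : u != w by [].
  by apply/eqP => uw; move: wS; rewrite inE /Sv inE -uw mem_head.
suff -> : last u s != w by [].
by apply/eqP => uw; move: wS; rewrite inE /Sv inE -uw mem_last.
Qed.

Lemma card_Sv u s : uniq (u :: s) -> #|Sv u s| = (size s).+1.
Proof.
move=> us; rewrite -[(size s).+1]/(size (u :: s)) -(card_uniqP us).
by apply: eq_card => z; rewrite inE.
Qed.

Lemma card_imC (a : 'I_n) u s : a \in Sv u s ->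
  #|[set [set a; w] | w in ~: Sv u s]| = #|~: Sv u s|.
Proof.
move=> aS; apply: card_in_imset => w1 w2 w1S w2S eq12.
have : w1 \in [set a; w2] by rewrite -eq12 !inE eqxx orbT.
rewrite !inE => /orP[/eqP e1|/eqP //].
by move: w1S; rewrite inE e1 aS.
Qed.

Lemma card_D u s : uniq (u :: s) -> s != [::] ->
  #|Dset u s| = (2 * (n - (size s).+1))%N.
Proof.
move=> us sn.
have vS : last u s \in Sv u s by rewrite inE mem_last.
have uS : u \in Sv u s by rewrite inE mem_head.
have uv : u != last u s.
  clear vS uS; case: s us sn => [|y s] //= /andP[uys _] _.
  by apply: contraNneq uys => ->; rewrite mem_last.
rewrite /Dset cardsU.
have -> : [set [set u; w] | w in ~: Sv u s] :&: [set [set last u s; w] | w in ~: Sv u s] = finset.set0.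
  apply/setP => e; rewrite !inE; apply/negP => /andP[/imsetP[w1 w1S ->] /imsetP[w2 w2S e12]].
  have : u \in [set last u s; w2] by rewrite -e12 !inE eqxx.
  rewrite !inE => /orP[/eqP h|/eqP h]; first by rewrite -h eqxx in uv.
  by move: w2S; rewrite inE -h uS.
rewrite cards0 subn0 (card_imC uS) (card_imC vS) cardsCs finset.setCK card_ord card_Sv //.
by rewrite mul2n addnn.
Qed.

Lemma prod_phi_eq (p : R) u s : uniq (u :: s) -> s != [::] ->
  \prod_(e in pairs n) (p * phi u s e true + (1 - p) * phi u s e false) =
  p ^+ size s * (1 - p + p * lam) ^+ (2 * (n - (size s).+1)).
Proof.
move=> us sn.
rewrite (eq_bigr (fun e => if e \in pedges u s then p
          else if e \in Dset u s then 1 - p + p * lam else 1)); last first.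
  move=> e _; rewrite /phi; case: ifP => _; first by rewrite mulr1 mulr0 addr0.
  by case: ifP => _; rewrite ?mulr1; ring.
rewrite (bigID (fun e => e \in pedges u s)) /=.
rewrite [X in X * _](eq_bigr (fun _ => p)); last by move=> e /andP[_ ->].
rewrite [X in _ * X](eq_bigr (fun e => if e \in Dset u s then 1 - p + p * lam else 1)); last first.
  by move=> e /andP[_ h]; rewrite (negbTE h).
rewrite -big_mkcondr !prodr_const.
congr (_ ^+ _ * _ ^+ _).
  rewrite -(card_pedges us); apply: eq_card => e /=.
  apply/andP/idP => [[]//|h]; split => //.
  by move/fintype.subsetP: (pedges_pairs us); apply.
rewrite -(card_D us sn); apply: eq_card => e /=.
apply/idP/idP => [/andP[_ ->]//|h].
apply/andP; split => //; apply/andP; split; last exact: D_pedges.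
by move/fintype.subsetP: (D_pairs u s); apply.
Qed.

Lemma wt_ge0 (p : R) E : 0 <= p <= 1 -> 0 <= wt p E.
Proof.
move=> /andP[p0 p1]; rewrite /wt mulr_ge0 ?exprn_ge0 //.
by rewrite subr_ge0.
Qed.

Lemma Gnp_union (p : R) (P : {set {set 'I_n}} -> Prop) (f : {set {set 'I_n}} -> R) :
  0 <= p <= 1 -> (forall E, 0 <= f E) -> (forall E, P E -> 1 <= f E) ->
  Gnp_prob p P <= \sum_(E in graphs n) wt p E * f E.
Proof.
move=> hp f0 fP; rewrite /Gnp_prob; apply: ler_sum => E _.
case: asboolP => [/fP h|_]; last by rewrite mulr_ge0 ?wt_ge0.
by rewrite -[X in X <= _]mulr1 ler_wpM2l ?wt_ge0.
Qed.

Lemma Gnp_total (p : R) : \sum_(E in graphs n) wt p E = 1.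
Proof.
have := Gnp_expand p (fun _ _ => 1); rewrite /=.
move=> h; rewrite -[RHS](_ : \prod_(e in pairs n) (p * 1 + (1 - p) * 1) = 1).
  by rewrite -h; apply: eq_bigr => E _; rewrite big1 ?mulr1.
by rewrite big1 // => e _; ring.
Qed.

Lemma Gnp_compl (p : R) (P : {set {set 'I_n}} -> Prop) :
  Gnp_prob p P = 1 - Gnp_prob p (fun E => ~ P E).
Proof.
have h : Gnp_prob p P + Gnp_prob p (fun E => ~ P E) = \sum_(E in graphs n) wt p E.
  rewrite /Gnp_prob -big_split /=; apply: eq_bigr => E _.
  rewrite -/(wt p E).
  by case: asboolP => h; case: asboolP => hh //; rewrite ?addr0 ?add0r.
by rewrite Gnp_total in h; rewrite -h addrK.
Qed.

Definition Cst (d : R) : R := expR (8 * d).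
Definition Gf (d : R) u s E : R :=
  if uniq (u :: s) && (s != [::]) then Cst d * \prod_(e in pairs n) phi u s e (e \in E) else 0.
Definition Ff (d : R) (m : nat) E : R :=
  \sum_(i < m.+1) \sum_(u : 'I_n) \sum_(s : i.-tuple 'I_n) Gf d u s E.

Lemma phi_ge0 u s e b : 0 <= phi u s e b.
Proof.
rewrite /phi; case: ifP => _; first exact: ler0n.
by case: ifP => _; case: b; rewrite ?lam_ge0 ?ler01.
Qed.

Lemma Gf_ge0 d u s E : 0 <= Gf d u s E.
Proof.
rewrite /Gf; case: ifP => _ //; rewrite mulr_ge0 ?expR_ge0 //.
by apply: prodr_ge0 => e _; exact: phi_ge0.
Qed.

Lemma Ff_ge0 d m E : 0 <= Ff d m E.
Proof. by do 3 (apply: sumr_ge0 => ? _); exact: Gf_ge0. Qed.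

Lemma sum_ge_term (I : finType) (i : I) (F : I -> R) :
  (forall j, 0 <= F j) -> F i <= \sum_j F j.
Proof. by move=> h; rewrite (bigD1 i) //= lerDl sumr_ge0. Qed.

Lemma bad_Ff d (x : R) E :
  (exists u v : 'I_n, u != v /\ ((deg E u)%:R : R) < d /\ ((deg E v)%:R : R) < d /\
      exists t : nat, (t%:R : R) <= x /\ reach E t u v) ->
  1 <= Ff d (Num.truncn x) E.
Proof.
case=> u [v [uv [su [sv [t [tx rt]]]]]].
have [s [ps us ls zs]] := reach_upath rt.
have sn : s != [::].
  by case: s ls {ps us zs} => //= h; rewrite h eqxx in uv.
have x0 : 0 <= x by apply: le_trans tx; exact: ler0n.
have sm : (size s < (Num.truncn x).+1)%N.
  by rewrite ltnS Num.Theory.truncn_ge_nat //; apply: le_trans tx; rewrite ler_nat.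

have h1 : Gf d u (in_tuple s) E <= Ff d (Num.truncn x) E.
  apply: le_trans (sum_ge_term (Ordinal sm) _); last by move=> j; do 2 (apply: sumr_ge0 => ? _); exact: Gf_ge0.
  apply: le_trans (sum_ge_term u _); last by move=> j; apply: sumr_ge0 => ? _; exact: Gf_ge0.
  have := @sum_ge_term ((size s).-tuple 'I_n) (in_tuple s) (fun s0 : (size s).-tuple 'I_n => Gf d u (tval s0) E).
  by apply => j; exact: Gf_ge0.
apply: le_trans h1.
rewrite /Gf; move: us sn; rewrite [uniq _]/= => -> -> /=.
have := prod_phi_ge ps; rewrite ls => h.
apply: le_trans (ler_wpM2l (expR_ge0 _) h).
rewrite /Cst /lam -(expRM_natl (deg E u + deg E v)) -expRD.
apply: le_trans (expR_ge1Dx _); rewrite lerDl natrD.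
move: su sv; set a := (deg E u)%:R; set b := (deg E v)%:R; clearbody a b => su sv.
clear -su sv. lra.
Qed.


Lemma sum_Gf (p d : R) u s : uniq (u :: s) -> s != [::] ->
  \sum_(E in graphs n) wt p E * Gf d u s E =
  Cst d * (p ^+ size s * (1 - p + p * lam) ^+ (2 * (n - (size s).+1))).
Proof.
move=> us sn; rewrite -(prod_phi_eq p us sn) -Gnp_expand big_distrr /=.
by apply: eq_bigr => E _; rewrite /Gf us sn /=; ring.
Qed.

Lemma q_ge0 (p : R) : 0 <= p <= 1 -> 0 <= 1 - p + p * lam.
Proof. by move=> /andP[p0 p1]; rewrite addr_ge0 ?subr_ge0 ?mulr_ge0 ?lam_ge0. Qed.

Lemma q_le1 (p : R) : 0 <= p <= 1 -> 1 - p + p * lam <= 1.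
Proof.
move=> /andP[p0 p1]; have := lam_le1; have := lam_ge0 => l0 l1.
have : p * lam <= p by rewrite -[X in _ <= X]mulr1 ler_wpM2l.
lra.
Qed.

Lemma sum_Gf_le (p d : R) i (s : i.-tuple 'I_n) u : 0 <= p <= 1 ->
  \sum_(E in graphs n) wt p E * Gf d u s E <=
  Cst d * (p ^+ i * (1 - p + p * lam) ^+ (2 * (n - i.+1))).
Proof.
move=> hp; case/andP: (hp) => p0 p1.
case h : (uniq (u :: s) && (tval s != [::])).
  by case/andP: h => us sn; rewrite sum_Gf // size_tuple.
rewrite big1; last by move=> E _; rewrite /Gf h mulr0.
by rewrite mulr_ge0 ?expR_ge0 // mulr_ge0 ?exprn_ge0 ?q_ge0.
Qed.

Lemma sum_Ff_le (p d : R) m : 0 <= p <= 1 ->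
  \sum_(E in graphs n) wt p E * Ff d m E <=
  \sum_(i < m.+1) (n ^ i.+1)%:R * (Cst d * (p ^+ i * (1 - p + p * lam) ^+ (2 * (n - i.+1)))).
Proof.
move=> hp.
rewrite (eq_bigr (fun E => \sum_(i < m.+1) \sum_(u : 'I_n) \sum_(s : i.-tuple 'I_n)
                            wt p E * Gf d u s E)); last first.
  move=> E _; rewrite /Ff big_distrr; apply: eq_bigr => i _.
  rewrite big_distrr; apply: eq_bigr => u _; by rewrite big_distrr.
rewrite exchange_big; apply: ler_sum => i _.
rewrite exchange_big.
apply: le_trans (_ : \sum_(u : 'I_n) \sum_(s : i.-tuple 'I_n)
   Cst d * (p ^+ i * (1 - p + p * lam) ^+ (2 * (n - i.+1))) <= _).
  apply: ler_sum => u _; rewrite exchange_big; apply: ler_sum => s _.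
  exact: sum_Gf_le.
rewrite !sumr_const card_tuple card_ord -mulrnA [(n ^ i * n)%N]mulnC -expnS -mulr_natl.
by rewrite mulr1 mulr_natl.
Qed.

Lemma term_le (p d : R) m (i : 'I_m.+1) : 0 <= p <= 1 -> 1 <= n%:R * p ->
  (n ^ i.+1)%:R * (Cst d * (p ^+ i * (1 - p + p * lam) ^+ (2 * (n - i.+1)))) <=
  n%:R * (n%:R * p) ^+ m * Cst d * (1 - p + p * lam) ^+ (2 * (n - m.+1)).
Proof.
move=> hp np1; have [p0 p1] := andP hp.
have im : (i <= m)%N by rewrite -ltnS ltn_ord.
have e : (n ^ i.+1)%:R * (Cst d * (p ^+ i * (1 - p + p * lam) ^+ (2 * (n - i.+1)))) =
  n%:R * (n%:R * p) ^+ i * Cst d * (1 - p + p * lam) ^+ (2 * (n - i.+1)).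
  by rewrite expnS natrM natrX exprMn; ring.
rewrite e; have C0 : 0 <= Cst d by exact: expR_ge0.
apply: ler_pM; rewrite ?exprn_ge0 ?q_ge0 ?mulr_ge0 //.
- by rewrite exprn_ge0 // mulr_ge0 ?ler0n.
- by rewrite ler_wpM2r // ler_wpM2l ?ler0n //; exact: ler_weXn2l.
- apply: ler_wiXn2l; rewrite ?q_ge0 ?q_le1 //.
  by rewrite leq_mul2l /= leq_sub2l.
Qed.

Lemma bad_prob (p d x : R) (P : {set {set 'I_n}} -> Prop) :
  0 <= p <= 1 -> 1 <= n%:R * p ->
  (forall E, P E -> exists u v : 'I_n, u != v /\ ((deg E u)%:R : R) < d /\
      ((deg E v)%:R : R) < d /\ exists t : nat, (t%:R : R) <= x /\ reach E t u v) ->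
  Gnp_prob p P <= ((Num.truncn x).+1)%:R * (n%:R * (n%:R * p) ^+ (Num.truncn x) * Cst d *
                     (1 - p + p * lam) ^+ (2 * (n - (Num.truncn x).+1))).
Proof.
move=> hp np1 H.
apply: le_trans (Gnp_union hp (Ff_ge0 d (Num.truncn x)) (fun E h => bad_Ff (H E h))) _.
apply: le_trans (sum_Ff_le d (Num.truncn x) hp) _.
have h := fun (i : 'I_(Num.truncn x).+1) (_ : true) => term_le d i hp np1.
apply: le_trans (ler_sum _ h) _.
by rewrite sumr_const card_ord [X in _ <= X]mulr_natl.
Qed.
End Event.

Section Analysis.
Variable R : realType.
Variables k n : nat.
Hypothesis hn : (0 < n)%N.
Hypothesis hLL : 1000 + 2 * (k.+1)%:R <= ln (ln (n%:R : R)).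

Let N : R := n%:R.
Let L : R := ln N.
Let LL : R := ln L.
Let K : R := (k.+1)%:R.
Let a : R := L + K * LL - ln LL.
Let p : R := p_lemma4 R k n.
Let x : R := 3 / 4 * D_lemma4 R n.
Let m : nat := Num.truncn x.
Let y : R := L / LL.

Lemma N0 : 0 < N. Proof. by rewrite ltr0n. Qed.
Lemma K0 : 0 <= K. Proof. exact: ler0n. Qed.
Lemma LL1000 : 1000 + 2 * K <= LL. Proof. exact: hLL. Qed.
Lemma LLge : 1000 <= LL. Proof. have := LL1000; have := K0; lra. Qed.
Lemma L1 : 1 < L.
Proof.
rewrite ltNge; apply/negP => h; have := ln_le0 h; rewrite -/LL.
have := LLge; lra.
Qed.
Lemma eL : expR LL = L.
Proof. by apply/eqP; rewrite lnK_eq; have := L1; lra. Qed.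
Lemma eN : expR L = N.
Proof. by apply/eqP; rewrite lnK_eq N0. Qed.
Lemma LL0 : 0 <= LL. Proof. have := LLge; lra. Qed.
Lemma Lsq : LL ^+ 2 / 2 <= L.
Proof.
rewrite -eL; have := expR_ge1Dxn 1 LL0.
change ((1.+1)`!%:R) with (2 : R); lra.
Qed.
Lemma Lcube : L ^+ 3 / 6 <= N.
Proof.
rewrite -eN; have := expR_ge1Dxn 2 (ltW (lt_trans ltr01 L1)).
change ((2.+1)`!%:R) with (6 : R); lra.
Qed.
Lemma LLsmall : LL <= L / 500.
Proof. have := Lsq; have := LLge; nra. Qed.
Lemma Lbig : 1000 <= L.
Proof. have := LLsmall; have := LLge; lra. Qed.
Lemma LLL0 : 0 <= ln LL.
Proof. by apply: ln_ge0; have := LLge; lra. Qed.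
Lemma LLLlt : ln LL < LL.
Proof. by apply: ln_sublinear; have := LLge; lra. Qed.
Lemma K1 : 1 <= K. Proof. by rewrite /K ler1n. Qed.
Lemma a_ge : L <= a.
Proof. rewrite /a; have := K1; have := LLLlt; have := LLge; nra. Qed.
Lemma a_le : a <= 2 * L.
Proof. rewrite /a; have := Lsq; have := LL1000; have := K0; have := LLL0; nra. Qed.
Lemma ep : p = a / N. Proof. by []. Qed.
Lemma Np : N * p = a.
Proof. by rewrite ep mulrC divfK // gt_eqF // N0. Qed.
Lemma yLL : y * LL = L.
Proof. by rewrite /y divfK // gt_eqF //; have := LLge; lra. Qed.
Lemma y0 : 0 <= y.
Proof. by rewrite /y divr_ge0 //; [have := L1 | have := LLge]; lra. Qed.
Lemma ysmall : y <= L / 1000.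
Proof. have := yLL; have := y0; have := LLge; nra. Qed.
Lemma ex : x = 3 / 4 * y. Proof. by []. Qed.
Lemma x0 : 0 <= x. Proof. by rewrite ex; have := y0; lra. Qed.
Lemma mx : m%:R <= x. Proof. by rewrite /m Num.Theory.truncn_le x0. Qed.
Lemma m1L : (m.+1)%:R <= L.
Proof. rewrite -natr1; have := mx; rewrite ex; have := ysmall; have := Lbig; lra. Qed.
Lemma mn : (m.+1 <= n)%N.
Proof.
have : (m.+1)%:R < N by apply: le_lt_trans m1L _; apply: ln_sublinear; exact: N0.
by rewrite ltr_nat => /ltnW.
Qed.
Lemma am : a * (m.+1)%:R <= N.
Proof.
have h1 : a * (m.+1)%:R <= 2 * L * L.
  apply: ler_pM; rewrite ?ler0n ?a_le ?m1L //.
  by have := a_ge; have := L1; lra.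
have h2 : 2 * L * L <= L ^+ 3 / 6 by have := Lbig; nra.
by have := Lcube; lra.
Qed.
Lemma pm : p * (m.+1)%:R <= 1.
Proof. by rewrite ep mulrAC ler_pdivrMr ?N0 // mul1r am. Qed.
Lemma p0 : 0 <= p.
Proof. by rewrite ep divr_ge0 ?ler0n //; have := a_ge; have := L1; lra. Qed.
Lemma p1 : p <= 1.
Proof.
have := pm; have := p0; have : 1 <= (m.+1)%:R :> R by rewrite ler1n.
nra.
Qed.
Lemma np1 : 1 <= N * p.
Proof. by rewrite Np; have := a_ge; have := L1; lra. Qed.
Lemma lam16 : lam R <= 1 / 16.
Proof.
have e1 : 2 <= expR (1 : R) by have := expR_ge1Dx (1 : R); lra.
have e4 : expR (4 : R) = expR 1 ^+ 4 by rewrite -expRM_natl mulr1.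
have h16 : 16 <= expR (4 : R).
  rewrite e4; have -> : (16 : R) = 2 ^+ 4 by rewrite -natrX.
  by apply: lerXn2r; rewrite ?nnegrE ?expR_ge0.
have hl : lam R * expR 4 = 1 by rewrite /lam mulrC expRxMexpNx_1.
have := lam_ge0 R; nra.
Qed.
Lemma final_arith (L' LL' y' A B : R) : A <= 3 / 4 * L' + 3 / 4 * y' ->
  B <= - (15 / 8) * (L' - 1) -> LL' <= L' / 500 -> y' <= L' / 1000 -> 1000 <= L' ->
  LL' + (L' + A + 8 * (L' / 100) + B) <= - (L' / 100).
Proof. move=> *; lra. Qed.

Lemma main_bound :
  (m.+1)%:R * (N * (N * p) ^+ m * Cst (L / 100) * (1 - p + p * lam R) ^+ (2 * (n - m.+1)))
  <= expR (- (L / 100)).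
Proof.
have a0 : 0 < a by have := a_ge; have := L1; lra.
have l2 : ln (2 : R) <= 1.
  have h : (-1 : R) < 1 by lra.
  have e2 : (1 + 1 : R) = 2 by [].
  by have := @le_ln1Dx R 1 h; rewrite e2.
have lna : ln a <= 1 + LL.
  have L0 : 0 < L by have := L1; lra.
  have : ln a <= ln (2 * L).
    by rewrite ler_ln ?posrE ?a_le // mulr_gt0.
  rewrite lnM ?posrE // -/LL => h2; lra.
have lna0 : 0 <= ln a by apply: ln_ge0; have := a_ge; have := L1; lra.
have S1 : m%:R * ln a <= 3 / 4 * L + 3 / 4 * y.
  apply: le_trans (_ : x * (1 + LL) <= _).
    by apply: ler_pM; rewrite ?ler0n ?mx.
  by rewrite ex; have := yLL; lra.
set q := 1 - p + p * lam R.
set j := (2 * (n - m.+1))%N.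
have q0 : 0 <= q by apply: q_ge0; rewrite p0 p1.
have jr : (j%:R : R) = 2 * (N - (m.+1)%:R) by rewrite natrM natrB ?mn.
have S2 : (j%:R : R) * - (p * (1 - lam R)) <= - (15 / 8) * (L - 1).
  rewrite jr.
  have -> : 2 * (N - (m.+1)%:R) * - (p * (1 - lam R)) =
            - 2 * (1 - lam R) * (N * p - p * (m.+1)%:R) by ring.
  rewrite Np; set c := 1 - lam R; set Z := a - p * (m.+1)%:R.
  have c15 : 15 / 16 <= c by rewrite /c; have := lam16; lra.
  have Z1 : L - 1 <= Z by rewrite /Z; have := pm; have := a_ge; lra.
  have Z0 : 0 <= Z by have := L1; lra.
  have : 15 / 16 * Z <= c * Z by apply: ler_wpM2r.
  by move: Z1; clear; lra.
have qexp : q ^+ j <= expR (j%:R * - (p * (1 - lam R))).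
  rewrite expRM_natl; apply: lerXn2r; rewrite ?nnegrE ?expR_ge0 //.
  by apply: le_trans (expR_ge1Dx _); rewrite /q; lra.
have ea : a ^+ m = expR (m%:R * ln a) by rewrite expRM_natl lnK // posrE.
rewrite Np ea /Cst.
apply: le_trans (_ : expR LL * (expR L * expR (m%:R * ln a) * expR (8 * (L / 100)) *
                       expR (j%:R * - (p * (1 - lam R)))) <= _).
  apply: ler_pM; rewrite ?ler0n ?eL ?m1L //.
    by rewrite !mulr_ge0 ?ler0n ?expR_ge0 ?exprn_ge0.
  rewrite eN; apply: ler_wpM2l => //.
  by rewrite !mulr_ge0 ?ler0n ?expR_ge0.
rewrite -!expRD ler_expR.
exact: (final_arith S1 S2 LLsmall ysmall Lbig).
Qed.
End Analysis.

Unset Implicit Arguments.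

Lemma Gnp_ge0 (R : realType) n (p : R) (P : {set {set 'I_n}} -> Prop) :
  0 <= p <= 1 -> 0 <= Gnp_prob p P.
Proof.
move=> hp; apply: sumr_ge0 => E _; case: asboolP => _ //.
exact: (wt_ge0 E hp).
Qed.

Theorem lemma4 (R : realType) (k : nat) (hk : (1 <= k)%N) :
  almost_surely (p_lemma4 R k)
    (fun n E => ~ exists u v : 'I_n, u != v /\ small R E u /\ small R E v /\
        exists t : nat, (t%:R : R) <= 3 / 4 * D_lemma4 R n /\ reach E t u v).
Proof.
rewrite /almost_surely; apply/cvgrPdist_le => eps e0.
pose M0 : R := 1000 + 2 * (k.+1)%:R.
have H1 : \forall n \near eventually, expR (expR M0) <= (n%:R : R) := nbhs_infty_ger _.
have H2 : \forall n \near eventually, expR (- (100 * ln eps)) <= (n%:R : R) := nbhs_infty_ger _.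
apply: filterS2 H1 H2 => n h1 h2.
have hn : (0 < n)%N by rewrite -(ltr0n R); apply: lt_le_trans (expR_gt0 _) h1.
have Npos : (0 : R) < n%:R by rewrite ltr0n.
have hL : expR M0 <= ln (n%:R : R).
  by rewrite -[X in X <= _]expRK ler_ln ?posrE ?expR_gt0.
have hLL : M0 <= ln (ln (n%:R : R)).
  by rewrite -[X in X <= _]expRK ler_ln ?posrE ?expR_gt0 //; apply: lt_le_trans (expR_gt0 _) hL.
have hp : 0 <= p_lemma4 R k n /\ p_lemma4 R k n <= 1.
  by split; [apply: p0 | apply: p1].
rewrite Gnp_compl.
set B := Gnp_prob _ _.
have -> : 1 - (1 - B) = B by ring.
have B0 : 0 <= B by apply: Gnp_ge0; apply/andP.
rewrite ger0_norm //.
apply: le_trans (bad_prob (d := ln (n%:R : R) / 100) (x := 3 / 4 * D_lemma4 R n) _ (np1 hn hLL) _) _.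
- by apply/andP.
- move=> E /Classical_Prop.NNPP [u [v [uv [su [sv [t [tx rt]]]]]]].
  by exists u, v; split => //; split => //; split => //; exists t.
apply: le_trans (main_bound hn hLL) _.
have hlog : - (100 * ln eps) <= ln (n%:R : R).
  by rewrite -[X in X <= _]expRK ler_ln ?posrE ?expR_gt0.
rewrite -[X in _ <= X](lnK (_ : eps \in Num.pos)) ?posrE // ler_expR.
lra.
Qed.
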